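(* Let $\mathcal{B}$ be a real Banach space with dual $\mathcal{B}^*$, let $\nu_j\in\mathcal{B}^*$, $j\in\mathbb{N}_m$, be linearly independent and let $\mathbf{y}\in\mathbb{R}^m$. Then $\hat f\in\mathcal{B}$ is a solution of the minimum norm interpolation problem with data $\mathbf{y}$ if and only if $\hat f\in\mathcal{M}_{\mathbf{y}}$ and there exist $c_j\in\mathbb{R}$, $j\in\mathbb{N}_m$, such that $$\hat f\in\gamma\,\partial\|\cdot\|_{\mathcal{B}^*}\Big(\sum_{j\in\mathbb{N}_m}c_j\nu_j\Big),\qquad \gamma:=\Big\|\sum_{j\in\mathbb{N}_m}c_j\nu_j\Big\|_{\mathcal{B}^*},$$ where $\hat f$ is identified with its canonical image in $\mathcal{B}^{**}$.
   Context: $\mathcal{B}$ is a real Banach space with dual $\mathcal{B}^*$ and pairing $\langle\nu,f\rangle_{\mathcal{B}}:=\nu(f)$; $\mathbb{N}_m:=\{1,\dots,m\}$; $\mathcal{L}(f):=[\langle\nu_j,f\rangle_{\mathcal{B}}:j\in\mathbb{N}_m]$, $\mathcal{M}_{\mathbf{y}}:=\{f\in\mathcal{B}:\mathcal{L}(f)=\mathbf{y}\}$; a solution of the minimum norm interpolation problem with data $\mathbf{y}$ is an $\hat f\in\mathcal{M}_{\mathbf{y}}$ with $\|\hat f\|_{\mathcal{B}}=\inf\{\|f\|_{\mathcal{B}}:f\in\mathcal{M}_{\mathbf{y}}\}$. For a convex $\phi$ on a real normed space $X$, $\partial\phi(f):=\{\nu\in X^*:\phi(g)-\phi(f)\ge\nu(g-f)\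 \forall g\in X\}$; so $\partial\|\cdot\|_{\mathcal{B}^*}(\nu)\subseteq\mathcal{B}^{**}$. *)

(* Defs.v *)
From HB Require Import structures.
From mathcomp Require Import all_boot all_order all_algebra.
From mathcomp Require Import all_classical all_reals all_analysis.
Set Implicit Arguments. Unset Strict Implicit. Unset Printing Implicit Defensive.
Import Order.TTheory GRing.Theory Num.Theory.
Import numFieldNormedType.Exports.
Local Open Scope classical_set_scope.
Local Open Scope ring_scope.

Definition is_dual {R : realType} {B : normedModType R} (nu : B -> R) : Prop :=
  (forall (a : R) (x y : B), nu (a *: x + y) = a * nu x + nu y) /\ continuous nu.

Definition dnorm {R : realType} {B : normedModType R} (nu : B -> R) : R :=
  sup [set `|nu x| | x in [set x : B | `|x| <= 1]].

Definition is_bidual {R : realType} {B : normedModType R} (phi : (B -> R) -> R) : Prop :=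
  (forall (a : R) (mu1 mu2 : B -> R), is_dual mu1 -> is_dual mu2 ->
      phi (fun x => a * mu1 x + mu2 x) = a * phi mu1 + phi mu2) /\
  (exists C : R, forall mu : B -> R, is_dual mu -> `|phi mu| <= C * dnorm mu).

Definition subdiff_dnorm {R : realType} {B : normedModType R} (nu : B -> R)
  (phi : (B -> R) -> R) : Prop :=
  is_bidual phi /\
  forall mu : B -> R, is_dual mu ->
    dnorm mu - dnorm nu >= phi (fun x => mu x - nu x).

Definition canon_emb {R : realType} {B : normedModType R} (f : B) : (B -> R) -> R :=
  fun mu => mu f.

Definition interp_set {R : realType} {B : normedModType R} (m : nat)
  (nu : 'I_m -> B -> R) (y : 'I_m -> R) : set B :=
  [set f | forall j, nu j f = y j].

Definition is_mni_solution {R : realType} {B : normedModType R} (m : nat)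
  (nu : 'I_m -> B -> R) (y : 'I_m -> R) (fh : B) : Prop :=
  interp_set nu y fh /\ `|fh| = inf [set `|f| | f in interp_set nu y].

Definition lin_indep_dual {R : realType} {B : normedModType R} (m : nat)
  (nu : 'I_m -> B -> R) : Prop :=
  forall c : 'I_m -> R, (forall x : B, \sum_(j < m) c j * nu j x = 0) ->
    forall j, c j = 0.

(* Main.v *)
Require Import Defs.
From HB Require Import structures.
From mathcomp Require Import all_boot all_order all_algebra.
From mathcomp Require Import all_classical all_reals all_analysis.
From mathcomp Require Import ring lra.
Import Order.TTheory GRing.Theory Num.Theory.
Import numFieldNormedType.Exports.
Local Open Scope classical_set_scope.
Local Open Scope ring_scope.

Section Basics.
Set Implicit Arguments. Unset Strict Implicit. Unset Printing Implicit Defensive.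
Context {R : realType} {B : normedModType R}.

Definition islin (f : B -> R) := forall (a : R) (x y : B), f (a *: x + y) = a * f x + f y.

Lemma lin0 f : islin f -> f 0 = 0.
Proof.
move=> h; have := h 1 0 0; rewrite scaler0 addr0 mul1r.
by move=> /(congr1 (fun z => z - f 0)); rewrite subrr addrK => <-.
Qed.

Lemma linZ f a x : islin f -> f (a *: x) = a * f x.
Proof. by move=> h; have := h a x 0; rewrite addr0 lin0 // addr0. Qed.

Lemma linD f x y : islin f -> f (x + y) = f x + f y.
Proof. by move=> h; have := h 1 x y; rewrite scale1r mul1r. Qed.

Lemma linN f x : islin f -> f (- x) = - f x.
Proof. by move=> h; rewrite -scaleN1r linZ // mulN1r. Qed.

Lemma linB f x y : islin f -> f (x - y) = f x - f y.
Proof. by move=> h; rewrite linD // linN. Qed.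

Lemma bounded_cont f K : islin f -> (forall x, `|f x| <= K * `|x|) -> continuous f.
Proof.
move=> hl hb x; apply/cvgrPdist_lt => e e0; apply/nbhs_normP.
have k0 : 0 < `|K| + 1 by rewrite ltr_wpDl.
exists (e / (`|K| + 1)) => /=; first by rewrite divr_gt0.
move=> z /= hz; rewrite -linB //; apply: (le_lt_trans (hb _)).
move: hz; rewrite ltr_pdivlMr // => hz.
have := normr_ge0 (x - z); have := ler_norm K; have := normr_ge0 K.
move: (`|x - z|) (`|K|) hz => d k hz h1 h2 h3; nra.
Qed.
Definition bnd (f : B -> R) := exists K, forall x, `|f x| <= K * `|x|.

Lemma cont_bnd f : islin f -> continuous f -> bnd f.
Proof.
move=> hl hc; have := hc 0; rewrite /continuous_at (lin0 hl).
move=> /cvgrPdist_lt /(_ 1 ltr01) /nbhs_norm0P [d /= d0 hd].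
exists (2 / d) => x; have [->|x0] := eqVneq x 0.
  by rewrite lin0 // normr0 normr0 mulr0.
have n0 : 0 < `|x| by rewrite normr_gt0.
pose t := d / (2 * `|x|).
have t0 : 0 < t by rewrite divr_gt0 // mulr_gt0.
have := hd (t *: x) => /=; rewrite normrZ gtr0_norm // sub0r normrN linZ // normrM gtr0_norm //.
have e1 : t * `|x| = d / 2 by rewrite /t; field; rewrite gt_eqF.
have e2 : t * (2 * `|x|) = d by rewrite /t; field; rewrite gt_eqF.
have e3 : (2 / d) * d = 2 by field; rewrite gt_eqF.
rewrite e1 => /(_ _) h; have {h} h : t * `|f x| < 1 by apply: h; lra.
clear e1; move: e2 e3 h t0 n0 d0; move: (2 / d) t (`|x|) (`|f x|) => K t n a.
move=> e2 e3 h t0 n0 d0; nra.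
Qed.

Lemma dnorm_ge0 f : bnd f -> 0 <= dnorm f.
Proof.
move=> [K hK]; apply: (le_trans (normr_ge0 (f 0))); apply: ub_le_sup.
  exists `|K| => _ [x /= x1 <-]; apply: (le_trans (hK x)).
  apply: (le_trans (ler_norm _)); rewrite normrM normr_id.
  by apply: ler_piMr => //; rewrite normr_id.
by exists (0:B) => //=; rewrite normr0.
Qed.

Lemma dnorm_le (f : B -> R) K : 0 <= K -> (forall x, `|f x| <= K * `|x|) -> dnorm f <= K.
Proof.
move=> K0 hK; apply: ge_sup; first by exists `|f 0|, (0:B) => //=; rewrite normr0.
move=> _ [x /= x1 <-]; apply: (le_trans (hK x)); exact: ler_piMr.
Qed.

Lemma dnorm_ub f : islin f -> bnd f -> forall x, `|f x| <= dnorm f * `|x|.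
Proof.
move=> hl [K hK] x; have [->|x0] := eqVneq x 0.
  by rewrite lin0 // !normr0 mulr0.
have n0 : 0 < `|x| by rewrite normr_gt0.
have : `|f (`|x|^-1 *: x)| <= dnorm f.
  apply: ub_le_sup; last first.
    by exists (`|x|^-1 *: x) => //=; rewrite normrZ normrV ?unitfE ?gt_eqF // normr_id mulVf // gt_eqF.
  exists `|K| => _ [z /= z1 <-]; apply: (le_trans (hK z)).
  apply: (le_trans (ler_norm _)); rewrite normrM normr_id.
  by apply: ler_piMr => //; rewrite normr_id.
rewrite linZ // normrM normrV ?unitfE ?gt_eqF // normr_id.
rewrite ler_pdivrMl // mulrC. by [].
Qed.
End Basics.

Section HBsec.
Set Implicit Arguments. Unset Strict Implicit. Unset Printing Implicit Defensive.
Context {R : realType} {B : normedModType R}.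
Variable K : R.
Hypothesis K0 : 0 <= K.

Definition LG (G : set (B * R)) :=
 [/\ G (0,0),
     (forall a p q, G p -> G q -> G (a *: p.1 + q.1, a * p.2 + q.2)),
     (forall x a b, G (x,a) -> G (x,b) -> a = b) &
     (forall x a, G (x,a) -> a <= K * `|x|)].

Lemma LG_ext G x0 : LG G -> ~ (exists a, G (x0, a)) ->
  exists G', [/\ LG G', G `<=` G' & exists c, G' (x0, c)].
Proof.
move=> [G00 Gcl Gfun Gdom] nx0.
pose S := [set p.2 - K * `|p.1 - x0| | p in G].
have Sne : S !=set0 by exists (0 - K * `|0 - x0|), (0, 0).
have Sub : forall d' a', G (d', a') -> ubound S (K * `|d' + x0| - a').
  move=> d' a' Gd _ [[d a] /= Gp <-].
  have := Gdom _ _ (Gcl 1 _ _ Gp Gd); rewrite /= scale1r mul1r => h.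
  have : `|d + d'| <= `|d - x0| + `|d' + x0|.
    by have := ler_normD (d - x0) (d' + x0); rewrite addrACA addNr addr0.
  move=> /(ler_wpM2l K0); rewrite mulrDr => h2; lra.
have Shu : has_ubound S by exists (K * `|0 + x0| - 0); exact: Sub.
set c := sup S.
have cle : forall d' a', G (d', a') -> c <= K * `|d' + x0| - a'.
  by move=> d' a' Gd; apply: ge_sup => //; exact: Sub.
have cge : forall d a, G (d, a) -> a - K * `|d - x0| <= c.
  by move=> d a Gd; apply: ub_le_sup => //; exists (d, a).
pose G' := fun q : B * R => exists t p, G p /\ q = (t *: x0 + p.1, t * c + p.2).
exists G'; split; last first.
- by exists c, 1, (0, 0); split => //; rewrite /= scale1r mul1r !addr0.
- by move=> [d a] Gp; exists 0, (d, a); split => //; rewrite /= scale0r mul0r !add0r.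
split.
- by exists 0, (0, 0); split => //; rewrite /= scale0r mul0r !add0r.
- move=> a _ _ [t [p [Gp ->]]] [t' [p' [Gp' ->]]] /=.
  exists (a * t + t'), (a *: p.1 + p'.1, a * p.2 + p'.2); split; first exact: Gcl.
  congr (_, _) => /=; first by rewrite scalerDr scalerDl scalerA; rewrite !addrA; congr (_ + _); rewrite -!addrA; congr (_ + _); rewrite addrC.
  by ring.
- move=> x a b [t [[d u] [Gp e1]]] [t' [[d' u'] [Gp' e2]]].
  case: e1 => ex ->; case: e2 => ex' ->; rewrite /= in ex ex'.
  have e : t *: x0 + d = t' *: x0 + d' by rewrite -ex -ex'.
  have [ett|tt'] := eqVneq t t'.
    subst t'; have edd := addrI _ e; subst d'.
    by rewrite (Gfun _ _ _ Gp Gp').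
  exfalso; apply: nx0.
  have Gdd := Gcl (-1) _ _ Gp Gp'; rewrite /= scaleN1r mulN1r in Gdd.
  have Gs := Gcl ((t - t')^-1) _ _ Gdd G00; rewrite /= !addr0 in Gs.
  eexists; suff -> : x0 = (t - t')^-1 *: (- d + d') by exact: Gs.
  apply: (@scalerI _ _ (t - t')); first by rewrite subr_eq0.
  rewrite scalerA mulfV ?subr_eq0 // scale1r scalerBl.
  have -> : t *: x0 = t' *: x0 + (- d + d').
    apply: (addIr d); rewrite e -!addrA; congr (_ + _).
    by rewrite addrC addrK.
  by rewrite addrC addKr.
- move=> x a [t [[d u] [Gp [-> ->]]]] /=.
  have [t0|t0|->] := ltgtP t 0; last by rewrite scale0r mul0r !add0r; exact: Gdom.
  + pose s := - t; have s0 : 0 < s by rewrite /s oppr_gt0.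
    have Gs := Gcl (s^-1) _ _ Gp G00; rewrite /= !addr0 in Gs.
    have := cge _ _ Gs.
    have -> : s^-1 *: d - x0 = s^-1 *: (t *: x0 + d).
      rewrite scalerDr scalerA (_ : s^-1 * t = -1) ?scaleN1r ?[_ + s^-1 *: d]addrC //.
      by rewrite /s invrN mulNr mulVf ?lt_eqF.
    rewrite normrZ gtr0_norm ?invr_gt0 //.
    move: (`|t *: x0 + d|) => n h.
    have hs : s * (s^-1 * u - K * (s^-1 * n)) <= s * c by rewrite ler_pM2l.
    have : s * (s^-1 * u - K * (s^-1 * n)) = u - K * n by field; rewrite gt_eqF.
    rewrite /s in hs * => e; lra.
  + have Gs := Gcl (t^-1) _ _ Gp G00; rewrite /= !addr0 in Gs.
    have := cle _ _ Gs.
    have -> : t^-1 *: d + x0 = t^-1 *: (t *: x0 + d).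
      by rewrite scalerDr scalerA mulVf ?gt_eqF // scale1r addrC.
    rewrite normrZ gtr0_norm ?invr_gt0 //.
    move: (`|t *: x0 + d|) => n h.
    have hs : t * c <= t * (K * (t^-1 * n) - t^-1 * u) by rewrite ler_pM2l.
    have : t * (K * (t^-1 * n) - t^-1 * u) = K * n - u by field; rewrite gt_eqF.
    move=> e; lra.
Qed.

Lemma HB_ext (G0 : set (B * R)) : LG G0 ->
  exists f, [/\ islin f, (forall x a, G0 (x, a) -> f x = a) &
              forall x, `|f x| <= K * `|x|].
Proof.
move=> LG0; pose Q H := LG (G0 `|` H).
have [A [QA Amax]] : exists A, Q A /\ forall B', A `<` B' -> ~ Q B'.
  apply: Zorn_bigcup => F FQ Ftot.
  set U := G0 `|` \bigcup_(X in F) X.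
  have sub1 X : F X -> G0 `|` X `<=` U.
    by move=> FX z [?|?]; [left|right; exists X].
  have pair : forall p q, U p -> U q ->
      exists H, [/\ LG H, H `<=` U, H p & H q].
    move=> p q [Gp|[X FX Xp]] [Gq|[Y FY Yq]].
    - by exists G0; split => // z ?; left.
    - by exists (G0 `|` Y); split; [exact: FQ|exact: sub1|left|right].
    - by exists (G0 `|` X); split; [exact: FQ|exact: sub1|right|left].
    - have [XY|YX] := Ftot _ _ FX FY.
      + by exists (G0 `|` Y); split; [exact: FQ|exact: sub1|right; exact: XY|right].
      + by exists (G0 `|` X); split; [exact: FQ|exact: sub1|right|right; exact: YX].
  split.
  - by left; case: LG0.
  - move=> a p q Up Uq; have [H [[_ Hcl _ _] HU Hp Hq]] := pair _ _ Up Uq.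
    exact/HU/Hcl.
  - move=> x a b Ua Ub; have [H [[_ _ Hf _] HU Hp Hq]] := pair _ _ Ua Ub.
    exact: Hf Hp Hq.
  - move=> x a Ua; have [H [[_ _ _ Hd] HU Hp _]] := pair _ _ Ua Ua.
    exact: Hd Hp.
have tot : forall x, exists a, (G0 `|` A) (x, a).
  move=> x; case: (pselect (exists a, (G0 `|` A) (x, a))) => // nx.
  have [G' [LG' sG' [c G'c]]] := LG_ext QA nx.
  exfalso; apply: (Amax (A `|` G')).
    split; first by move=> z Az; left.
    move=> h; apply: nx; exists c; right; apply: h; by right.
  rewrite /Q; have -> : G0 `|` (A `|` G') = G' by apply/seteqP; split => z;
    [case=> [?|[?|?]]; [apply: sG'; left|apply: sG'; right|]|right; right].
  exact: LG'.
have [f hf] := choice tot.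
case: QA => _ Gcl Gfun Gdom.
exists f; split.
- move=> a x z; apply: (Gfun (a *: x + z)); first exact: hf.
  exact: (Gcl a _ _ (hf x) (hf z)).
- by move=> x a G0a; apply: (Gfun x); [exact: hf|left].
- move=> x; rewrite ler_norml; apply/andP; split; last exact: Gdom (hf x).
  have fN : f (- x) = - f x.
    apply: (Gfun (- x)); first exact: hf.
    have := Gcl (-1) _ _ (hf x) (Gcl 0 _ _ (hf x) (hf 0)).
    have f0 : f 0 = 0 by apply: (Gfun 0); [exact: hf|left; case: LG0].
    by rewrite /= scale0r mul0r !add0r f0 !addr0 scaleN1r mulN1r.
  by have := Gdom _ _ (hf (- x)); rewrite normrN fN lerNl.
Qed.
End HBsec.

Section Span.
Set Implicit Arguments. Unset Strict Implicit. Unset Printing Implicit Defensive.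
Context {R : realType} {B : normedModType R}.

Lemma widen_lift m (i : 'I_m) : widen_ord (leqnSn m) i = lift ord_max i.
Proof. by apply: ord_inj; rewrite lift_max. Qed.

Lemma span_lemma (m : nat) (nu : 'I_m -> B -> R) (mu : B -> R) :
  (forall j, islin (nu j)) -> islin mu ->
  (forall x, (forall j, nu j x = 0) -> mu x = 0) ->
  exists c : 'I_m -> R, forall x, mu x = \sum_(j < m) c j * nu j x.
Proof.
elim: m nu mu => [|m IH] nu mu hnu hmu hker.
  by exists (fun _ => 0) => x; rewrite big_ord0; apply: hker => -[].
pose nu' := fun k : 'I_m => nu (lift ord_max k).
pose ln := nu ord_max.
have hnu' : forall k, islin (nu' k) by move=> k; exact: hnu.
have hln : islin ln by exact: hnu.
have allnu : forall x, (forall k, nu' k x = 0) -> ln x = 0 -> forall j, nu j x = 0.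
  by move=> x h1 h2 j; case: (unliftP ord_max j) => [k ->|->] //; exact: h1.
have sumE : forall (c' : 'I_m -> R) a x,
    \sum_(j < m.+1) (if unlift ord_max j is Some k then c' k else a) * nu j x =
    \sum_(k < m) c' k * nu' k x + a * ln x.
  move=> c' a x; rewrite big_ord_recr /= unlift_none; congr (_ + _).
  by apply: eq_bigr => k _; rewrite widen_lift liftK.
case: (pselect (exists x0, (forall k, nu' k x0 = 0) /\ ln x0 != 0)).
- move=> [x0 [h0 hx0]].
  pose z := (ln x0)^-1 *: x0.
  have lz : ln z = 1 by rewrite /z (linZ _ _ hln) mulVf.
  have nz : forall k, nu' k z = 0 by move=> k; rewrite /z (linZ _ _ (hnu' k)) h0 mulr0.
  pose a := mu z.
  pose mu2 := fun x => mu x - a * ln x.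
  have hmu2 : islin mu2.
    by move=> b x y; rewrite /mu2 hmu hln; ring.
  have [c' hc'] : exists c', forall x, mu2 x = \sum_(k < m) c' k * nu' k x.
    apply: IH => // x hx.
    have : mu (x - ln x *: z) = 0.
      apply: hker; apply: allnu => [k|]; first by rewrite (linB _ _ (hnu' k)) (linZ _ _ (hnu' k)) hx nz mulr0 subrr.
      by rewrite (linB _ _ hln) (linZ _ _ hln) lz mulr1 subrr.
    by rewrite (linB _ _ hmu) (linZ _ _ hmu) /mu2 /a mulrC.
  exists (fun j => if unlift ord_max j is Some k then c' k else a) => x.
  by rewrite sumE -hc' /mu2 subrK.
- move=> nex.
  have [c' hc'] : exists c', forall x, mu x = \sum_(k < m) c' k * nu' k x.
    apply: IH => // x hx; apply: hker; apply: allnu => //.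
    by case: (eqVneq (ln x) 0) => // hl; exfalso; apply: nex; exists x.
  exists (fun j => if unlift ord_max j is Some k then c' k else 0) => x.
  by rewrite sumE mul0r addr0 -hc'.
Qed.
End Span.

Section Duals.
Set Implicit Arguments. Unset Strict Implicit. Unset Printing Implicit Defensive.
Context {R : realType} {B : normedModType R}.

Lemma dual_bnd (f : B -> R) : is_dual f -> bnd f.
Proof. by move=> [hl hc]; exact: cont_bnd. Qed.

Lemma lin_bnd_dual (f : B -> R) : islin f -> bnd f -> is_dual f.
Proof. by move=> hl [K hK]; split => //; exact: bounded_cont hK. Qed.

Lemma dual_ext (f g : B -> R) : (forall x, f x = g x) -> is_dual g -> is_dual f.
Proof. by move=> e; have -> : f = g by apply: funext. Qed.

Lemma dual_comb a (f g : B -> R) : is_dual f -> is_dual g ->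
  is_dual (fun x => a * f x + g x).
Proof.
move=> hf hg; have [Kf hKf] := dual_bnd hf; have [Kg hKg] := dual_bnd hg.
apply: lin_bnd_dual.
  by move=> b x y; rewrite hf.1 hg.1; ring.
exists (`|a| * `|Kf| + `|Kg|) => x.
apply: (le_trans (ler_normD _ _)); rewrite normrM mulrDl -mulrA.
apply: lerD.
  apply: ler_wpM2l => //; apply: (le_trans (hKf x)); apply: ler_wpM2r => //; exact: ler_norm.
apply: (le_trans (hKg x)); apply: ler_wpM2r => //; exact: ler_norm.
Qed.

Lemma dual0 : is_dual (fun _ : B => (0 : R)).
Proof. by apply: lin_bnd_dual; [move=> *; rewrite mulr0 addr0|exists 0 => x; rewrite normr0 mul0r]. Qed.

Lemma dual_sum m (nu : 'I_m -> B -> R) (c : 'I_m -> R) :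
  (forall j, is_dual (nu j)) -> is_dual (fun x => \sum_(j < m) c j * nu j x).
Proof.
move=> hnu; elim: m nu c hnu => [|m IH] nu c hnu.
  by apply: (dual_ext _ dual0) => x; rewrite big_ord0.
have h := IH (fun j => nu (widen_ord (leqnSn m) j)) (fun j => c (widen_ord (leqnSn m) j)) (fun j => hnu _).
apply: (dual_ext _ (dual_comb (c ord_max) (hnu ord_max) h)) => x.
by rewrite big_ord_recr /= addrC.
Qed.

Lemma dnorm_D (f g : B -> R) : is_dual f -> is_dual g ->
  dnorm (fun x => f x + g x) <= dnorm f + dnorm g.
Proof.
move=> hf hg; apply: dnorm_le; first by apply: addr_ge0; apply: dnorm_ge0; exact: dual_bnd.
move=> x; apply: (le_trans (ler_normD _ _)); rewrite mulrDl.
by apply: lerD; apply: dnorm_ub => //; [exact: hf.1|exact: dual_bnd|exact: hg.1|exact: dual_bnd].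
Qed.

Lemma dnorm_Z a (f : B -> R) : 0 <= a -> is_dual f ->
  dnorm (fun x => a * f x) <= a * dnorm f.
Proof.
move=> a0 hf; apply: dnorm_le; first by apply: mulr_ge0 => //; apply: dnorm_ge0; exact: dual_bnd.
move=> x; rewrite normrM ger0_norm // -mulrA; apply: ler_wpM2l => //.
by apply: dnorm_ub => //; [exact: hf.1|exact: dual_bnd].
Qed.

Lemma dnorm0 : dnorm (fun _ : B => (0:R)) = 0.
Proof.
apply/le_anti/andP; split; first by apply: dnorm_le => // x; rewrite normr0 mul0r.
by apply: dnorm_ge0; exact: dual_bnd dual0.
Qed.

End Duals.

Lemma norming (R : realType) (B : normedModType R) (fh : B) :
  exists mu : B -> R, [/\ is_dual mu, mu fh = `|fh| & dnorm mu <= 1].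
Proof.
pose G0 := fun q : B * R => exists t : R, q = (t *: fh, t * `|fh|).
have LG0 : LG 1 G0.
  split.
  - by exists 0; rewrite scale0r mul0r.
  - move=> a _ _ [t ->] [t' ->] /=; exists (a * t + t').
    by rewrite scalerDl scalerA mulrDl mulrA.
  - move=> x a b [t [-> ->]] [t' []] /eqP; rewrite -subr_eq0 -scalerBl scaler_eq0.
    case/orP => [|/eqP ->]; last by rewrite normr0 !mulr0.
    by rewrite subr_eq0 => /eqP -> ->.
  - move=> x a [t [-> ->]]; rewrite mul1r normrZ; apply: ler_wpM2r => //; exact: ler_norm.
have [f [hl hv hb]] := HB_ext ler01 LG0.
exists f; split.
- apply: lin_bnd_dual => //; by exists 1.
- by apply: hv; exists 1; rewrite scale1r mul1r.
- exact: dnorm_le.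
Qed.

Lemma back (R : realType) (B : normedModType R) (m : nat)
  (nu : 'I_m -> B -> R) (y : 'I_m -> R) (fh : B) :
  (forall j, is_dual (nu j)) ->
  (interp_set nu y fh /\
   exists c : 'I_m -> R,
     let nuc := fun x : B => \sum_(j < m) c j * nu j x in
     let gamma := dnorm nuc in
     exists phi : (B -> R) -> R, subdiff_dnorm nuc phi /\
       forall mu : B -> R, is_dual mu -> canon_emb fh mu = gamma * phi mu) ->
  is_mni_solution nu y fh.
Proof.
move=> hnu [hfh [c]]; cbv zeta.
set nuc := (fun x : B => \sum_(j < m) c j * nu j x).
move=> [phi [[[philin _] hsub] hemb]].
have dnuc : is_dual nuc by exact: dual_sum.
set gamma := dnorm nuc in hsub hemb *.
have g0 : 0 <= gamma by apply: dnorm_ge0; exact: dual_bnd.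
have philin' : forall a mu1 mu2 g, is_dual mu1 -> is_dual mu2 ->
    (forall x, g x = a * mu1 x + mu2 x) -> phi g = a * phi mu1 + phi mu2.
  by move=> a mu1 mu2 g h1 h2 e; have -> : g = _ := funext e; exact: philin.
have hsub' : forall mu g, is_dual mu -> (forall x, g x = mu x - nuc x) ->
    phi g <= dnorm mu - gamma.
  by move=> mu g h e; have -> : g = _ := funext e; exact: hsub.
have phi0 : phi (fun _ => 0) = 0.
  have := philin' 1 _ _ (fun _ => 0) dual0 dual0 (fun x => esym (etrans (addr0 _) (mul1r _))).
  lra.
have phinuc : phi nuc = gamma.
  apply/le_anti/andP; split.
  - have d2 : is_dual (fun x => 2 * nuc x).
      by apply: (dual_ext _ (dual_comb 2 dnuc dual0)) => x; rewrite addr0.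
    have := hsub' _ nuc d2 (fun x => esym (_ : 2 * nuc x - nuc x = nuc x)).
    have := dnorm_Z (ler0n _ 2) dnuc.
    move=> h1 h2; have : phi nuc <= 2 * gamma - gamma.
      apply: (le_trans (h2 _)); first by move=> x; ring.
      by rewrite lerD2r.
    lra.
  - have e : phi (fun x => -1 * nuc x + 0) = - phi nuc.
      by rewrite (philin' (-1) nuc (fun _ => 0) _ dnuc dual0) // phi0 addr0 mulN1r.
    have h : phi (fun x => -1 * nuc x + 0) <= dnorm (fun _ : B => (0:R)) - gamma.
      by apply: hsub' dual0 _ => x; ring.
    rewrite e dnorm0 in h; lra.
have phile : forall mu, is_dual mu -> phi mu <= dnorm mu.
  move=> mu hmu.
  have h : phi mu <= dnorm (fun x => mu x + nuc x) - gamma.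
    by apply: hsub' => [|x]; [apply: (dual_ext _ (dual_comb 1 hmu dnuc)) => x; rewrite mul1r|ring].
  have := dnorm_D hmu dnuc; rewrite -/gamma; lra.
have nucfh : nuc fh = gamma * gamma by have := hemb nuc dnuc; rewrite /canon_emb phinuc.
have glef : forall f, interp_set nu y f -> gamma <= `|f|.
  move=> f hf.
  have e : nuc f = gamma * gamma.
    rewrite -nucfh /nuc; apply: eq_bigr => j _; by rewrite hf hfh.
  have h : `|nuc f| <= gamma * `|f| by apply: dnorm_ub; [exact: dnuc.1|exact: dual_bnd].
  rewrite e ger0_norm ?mulr_ge0 // in h.
  have [g00|gp] := eqVneq gamma 0; first by rewrite g00.
  by rewrite -(ler_pM2l (_ : 0 < gamma)) // lt_def gp g0.
have fhle : `|fh| <= gamma.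
  have [mu [hmu mufh hmu1]] := @norming _ _ fh.
  rewrite -mufh -[mu fh]/(canon_emb fh mu) hemb //.
  apply: (le_trans (ler_wpM2l g0 (phile _ hmu))).
  by rewrite -[X in _ <= X]mulr1; apply: ler_wpM2l.
split => //; apply/le_anti/andP; split.
- apply: lb_le_inf; first by exists `|fh|, fh.
  by move=> _ [f hf <-]; apply: le_trans fhle (glef f hf).
- apply: ge_inf; last by exists fh.
  by exists 0 => _ [f _ <-].
Qed.

Lemma zmod_fact (V : zmodType) (A Bv C D : V) : A + D = Bv + C -> A - Bv = C - D.
Proof. by move=> h; rewrite -[A](addrK D) h addrAC [Bv + C]addrC addrK. Qed.

Lemma fwd (R : realType) (B : normedModType R) (m : nat)
  (nu : 'I_m -> B -> R) (y : 'I_m -> R) (fh : B) :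
  (forall j, is_dual (nu j)) ->
  is_mni_solution nu y fh ->
  (interp_set nu y fh /\
   exists c : 'I_m -> R,
     let nuc := fun x : B => \sum_(j < m) c j * nu j x in
     let gamma := dnorm nuc in
     exists phi : (B -> R) -> R, subdiff_dnorm nuc phi /\
       forall mu : B -> R, is_dual mu -> canon_emb fh mu = gamma * phi mu).
Proof.
move=> hnu [hfh hinf]; split => //.
have hl j : islin (nu j) := (hnu j).1.
have minf : forall f, interp_set nu y f -> `|fh| <= `|f|.
  move=> f hf; rewrite hinf; apply: ge_inf; last by exists f.
  by exists 0 => _ [g _ <-].
have [fh0|fh0] := eqVneq fh 0.
  exists (fun _ => 0); cbv zeta; exists (fun _ => 0); split.
    split.
      split; first by move=> *; rewrite mulr0 addr0.
      by exists 0 => mu _; rewrite normr0 mul0r.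
    move=> mu hmu; rewrite subr_ge0.
    apply: le_trans (dnorm_ge0 (dual_bnd hmu)).
    by apply: dnorm_le => // x; rewrite big1 ?normr0 ?mul0r // => j _; rewrite mul0r.
  by move=> mu hmu; rewrite /canon_emb fh0 (lin0 hmu.1) mulr0.
have n0 : 0 < `|fh| by rewrite normr_gt0.
pose N x := forall j, nu j x = 0.
have fhN : ~ N fh.
  move=> hN; have : interp_set nu y 0 by move=> j; rewrite (lin0 (hl j)) -(hfh j) hN.
  by move/minf; rewrite normr0 => h; move: n0; rewrite ltNge h.
pose G0 := fun q : B * R => exists t n, N n /\ q = (t *: fh + n, t * `|fh|).
have LG0 : LG 1 G0.
  split.
  - by exists 0, 0; split; [move=> j; exact: lin0|rewrite scale0r add0r mul0r].
  - move=> a _ _ [t [n [Nn ->]]] [t' [n' [Nn' ->]]] /=.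
    exists (a * t + t'), (a *: n + n'); split.
      by move=> j; rewrite hl Nn Nn' mulr0 addr0.
    congr (_, _); last by ring.
    rewrite scalerDr scalerDl scalerA !addrA; congr (_ + _); rewrite -!addrA; congr (_ + _).
    by rewrite addrC.
  - move=> x a b [t [n [Nn [ex ->]]]] [t' [n' [Nn' [ex' ->]]]].
    have [->//|tt'] := eqVneq t t'.
    exfalso; apply: fhN => j.
    have e : (t - t') *: fh = n' - n.
      by rewrite scalerBl; apply: zmod_fact; rewrite -ex -ex'.
    have : fh = (t - t')^-1 *: (n' - n).
      by rewrite -e scalerA mulVf ?subr_eq0 // scale1r.
    by move=> ->; rewrite (linZ _ _ (hl j)) (linB _ _ (hl j)) Nn Nn' subrr mulr0.
  - move=> x a [t [n [Nn [-> ->]]]]; rewrite mul1r.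
    have [t0|t0] := leP t 0.
      by apply: le_trans (normr_ge0 _); rewrite mulr_le0_ge0.
    have hM : interp_set nu y (fh + t^-1 *: n).
      by move=> j; rewrite (linD _ _ (hl j)) (linZ _ _ (hl j)) Nn mulr0 addr0.
    have := minf _ hM; rewrite -(ler_pM2l t0) -{2}(gtr0_norm t0) -normrZ.
    by rewrite scalerDr scalerA mulfV ?gt_eqF // scale1r.
have [f0 [hf0 vf0 bf0]] := HB_ext ler01 LG0.
have f0N : forall n, N n -> f0 n = 0.
  by move=> n Nn; apply: vf0; exists 0, n; split => //; rewrite scale0r add0r mul0r.
have f0fh : f0 fh = `|fh|.
  apply: vf0; exists 1, 0; split; first by move=> j; exact: lin0.
  by rewrite scale1r addr0 mul1r.
have [c0 hc0] := span_lemma hl hf0 f0N.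
exists (fun j => `|fh| * c0 j); cbv zeta.
have -> : (fun x => \sum_(j < m) `|fh| * c0 j * nu j x) = (fun x => `|fh| * f0 x).
  apply: funext => x; rewrite hc0 mulr_sumr; apply: eq_bigr => j _; by rewrite mulrA.
have df0 : is_dual f0 by apply: lin_bnd_dual => //; exists 1.
have dnuc : is_dual (fun x => `|fh| * f0 x).
  by apply: (dual_ext _ (dual_comb `|fh| df0 dual0)) => x; rewrite addr0.
have dE : dnorm (fun x => `|fh| * f0 x) = `|fh|.
  apply/le_anti/andP; split.
    apply: dnorm_le => // x; rewrite normrM ger0_norm //; apply: ler_wpM2l => //.
    by rewrite -[X in _ <= X]mul1r.
  have := dnorm_ub dnuc.1 (dual_bnd dnuc) fh.
  rewrite f0fh ger0_norm ?mulr_ge0 // ler_pM2r //.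
rewrite dE.
exists (fun mu => mu fh / `|fh|); split.
  split.
    split; first by move=> a mu1 mu2 _ _; rewrite mulrDl mulrA.
    exists 1 => mu hmu; rewrite normrM normfV normr_id mul1r ler_pdivrMr //.
    exact: dnorm_ub hmu.1 (dual_bnd hmu) fh.
  move=> mu hmu; rewrite f0fh.
  have : mu fh / `|fh| <= dnorm mu.
    rewrite ler_pdivrMr //; apply: le_trans (ler_norm _) _.
    exact: dnorm_ub hmu.1 (dual_bnd hmu) fh.
  have -> : (mu fh - `|fh| * `|fh|) / `|fh| = mu fh / `|fh| - `|fh| by field; rewrite gt_eqF.
  rewrite dE; lra.
by move=> mu hmu; rewrite /canon_emb; field; rewrite gt_eqF.
Qed.

Theorem mainTheorem5 (R : realType) (B : completeNormedModType R) (m : nat)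
  (nu : 'I_m -> B -> R) (y : 'I_m -> R) (fh : B) :
  (forall j, is_dual (nu j)) -> lin_indep_dual nu ->
  is_mni_solution nu y fh <->
  (interp_set nu y fh /\
   exists c : 'I_m -> R,
     let nuc := fun x : B => \sum_(j < m) c j * nu j x in
     let gamma := dnorm nuc in
     exists phi : (B -> R) -> R, subdiff_dnorm nuc phi /\
       forall mu : B -> R, is_dual mu -> canon_emb fh mu = gamma * phi mu).
Proof.
move=> hnu _; split; [exact: fwd | exact: back].
Qed.
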